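(* If $G$ is an infinite $2$-edge-connected graph, then $G$ is cat-win.
   Context: Cat Herding is played on a simple, possibly infinite graph $G$. The cat first places its token on a vertex. Then the players alternate, the herder moving first: the herder deletes one edge of the current graph, and then, unless the cat's current vertex has degree $0$ in the current graph, the cat moves its token along a finite path with at least one edge in the current graph to a different vertex. The cat is captured when its vertex has degree $0$ in the current graph. $G$ is cat-win if the cat has a strategy that is never captured, and herder-win if the herder has a strategy that eventually captures the cat. A graph is $2$-edge-connected if every pair of vertices is joined by at least $2$ edge-disjoint finite paths (equivalently, it is connected and has no disconnecting set of fewer than $2$ edges). *)

(* Defs.v *)
From Stdlib Require Import List Relations.
Import ListNotations.
Set Implicit Arguments.

Definition simple_graph (V : Type) (adj : V -> V -> Prop) : Prop :=
  (forall u v, adj u v -> adj v u) /\ (forall v, ~ adj v v).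

Definition infinite_type (V : Type) : Prop :=
  ~ exists l : list V, forall x : V, In x l.

Definition del_adj (V : Type) (adj : V -> V -> Prop) (D : list (V * V))
  (u v : V) : Prop :=
  adj u v /\ ~ In (u, v) D /\ ~ In (v, u) D.

Definition reach (V : Type) (adj : V -> V -> Prop) (v w : V) : Prop :=
  clos_refl_trans V adj v w.

Definition connected (V : Type) (adj : V -> V -> Prop) : Prop :=
  forall u v : V, reach adj u v.

(* 2-edge-connected: connected and no disconnecting set of fewer than 2
   edges, i.e. deleting any single edge leaves the graph connected. *)
Definition two_edge_connected (V : Type) (adj : V -> V -> Prop) : Prop :=
  connected adj /\
  forall a b : V, adj a b -> connected (del_adj adj [(a, b)]).

Definition isolated (V : Type) (adj : V -> V -> Prop) (v : V) : Prop :=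
  forall w : V, ~ adj v w.

(* A cat strategy: an initial vertex, and a reply to each nonempty
   history of herder deletions (the cat's own moves are determined by
   its strategy, so the deletion history is the full history). *)
Record cat_strategy (V : Type) := {
  cat_start : V;
  cat_move : list (V * V) -> V }.

(* cat position after the herder deletions D (in chronological order) *)
Definition cat_pos (V : Type) (s : cat_strategy V) (D : list (V * V)) : V :=
  match D with
  | [] => cat_start s
  | _ => cat_move s D
  end.

Inductive legal_history (V : Type) (adj : V -> V -> Prop)
  : list (V * V) -> Prop :=
| lh_nil : legal_history adj []
| lh_snoc : forall D a b, legal_history adj D -> del_adj adj D a b ->
    legal_history adj (D ++ [(a, b)]).

Definition cat_winning_strategy (V : Type) (adj : V -> V -> Prop)
  (s : cat_strategy V) : Prop :=
  ~ isolated adj (cat_start s) /\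
  forall D a b, legal_history adj D -> del_adj adj D a b ->
    let D' := D ++ [(a, b)] in
    ~ isolated (del_adj adj D') (cat_pos s D) /\
    cat_pos s D' <> cat_pos s D /\
    clos_trans V (del_adj adj D') (cat_pos s D) (cat_pos s D').

Definition cat_win (V : Type) (adj : V -> V -> Prop) : Prop :=
  exists s : cat_strategy V, cat_winning_strategy adj s.

(* Main.v *)
Require Import Defs.
From Stdlib Require Import List Relations.
From Stdlib Require Import Classical ClassicalEpsilon.
Import ListNotations.

Definition Rinf {V : Type} (K : V -> V -> Prop) (v : V) : Prop :=
  forall l : list V, exists z, reach K v z /\ ~ In z l.
Definition covers {V : Type} (K : V -> V -> Prop) (x : V) (l : list V) : Prop :=
  forall z, reach K x z -> In z l.

Lemma reach_sym (V : Type) (K : V -> V -> Prop) :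
  (forall a b, K a b -> K b a) -> forall a b, reach K a b -> reach K b a.
Proof.
  intros Hs a b H; induction H.
  - apply rt_step; auto.
  - apply rt_refl.
  - eapply rt_trans; eauto.
Qed.

Lemma reach_mono (V : Type) (K K' : V -> V -> Prop) :
  (forall a b, K a b -> K' a b) -> forall a b, reach K a b -> reach K' a b.
Proof.
  intros Hs a b H; induction H.
  - apply rt_step; auto.
  - apply rt_refl.
  - eapply rt_trans; eauto.
Qed.

Lemma reach_trans (V : Type) (K : V -> V -> Prop) a b c :
  reach K a b -> reach K b c -> reach K a c.
Proof. intros; eapply rt_trans; eauto. Qed.

Lemma split_reach (V : Type) (K H : V -> V -> Prop) (x y : V) :
  (forall a b, K a b -> K b a) ->
  (forall a b, H a b -> K a b \/ (a = x /\ b = y) \/ (a = y /\ b = x)) ->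
  forall s t, reach H s t ->
  reach K s t \/ (reach K s x /\ reach K y t) \/ (reach K s y /\ reach K x t).
Proof.
  intros Ks HK s t Hr.
  apply clos_rt_rtn1 in Hr.
  induction Hr as [|q' q Hstep Hr IH].
  - left; apply rt_refl.
  - assert (St : forall a b c, reach K a b -> K b c -> reach K a c)
      by (intros; eapply rt_trans; [eauto| apply rt_step; auto]).
    destruct (HK _ _ Hstep) as [Hk | [[-> ->] | [-> ->]]].
    + destruct IH as [A | [[A B] | [A B]]].
      * left; eauto.
      * right; left; split; eauto.
      * right; right; split; eauto.
    + destruct IH as [A | [[A B] | [A B]]].
      * right; left; split; auto; apply rt_refl.
      * left; eapply rt_trans; [exact A|]. apply reach_sym; auto.
      * left; exact A.
    + destruct IH as [A | [[A B] | [A B]]].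
      * right; right; split; auto; apply rt_refl.
      * left; exact A.
      * left; eapply rt_trans; [exact A|]. apply reach_sym; auto.
Qed.

Lemma del_adj_sym (V : Type) (adj : V -> V -> Prop) D :
  simple_graph adj -> forall a b, del_adj adj D a b -> del_adj adj D b a.
Proof.
  intros [Hs _] a b (H1 & H2 & H3); repeat split; auto.
Qed.

Lemma del_adj_app (V : Type) (adj : V -> V -> Prop) X f a b :
  del_adj adj (X ++ [f]) a b <->
  del_adj adj X a b /\ (a, b) <> f /\ (b, a) <> f.
Proof.
  unfold del_adj; rewrite !in_app_iff; simpl; split.
  - intros (H1 & H2 & H3); repeat split; auto; intro E; subst; tauto.
  - intros ((H1 & H2 & H3) & H4 & H5); repeat split; auto; intros [H|[H|[]]];
      auto; congruence.
Qed.

Lemma del_adj_cons (V : Type) (adj : V -> V -> Prop) X d a b :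
  del_adj adj (d :: X) a b <->
  del_adj adj X a b /\ (a, b) <> d /\ (b, a) <> d.
Proof.
  unfold del_adj; simpl; split.
  - intros (H1 & H2 & H3); repeat split; auto; intro E; subst; tauto.
  - intros ((H1 & H2 & H3) & H4 & H5); repeat split; auto; intros [H|H];
      auto; congruence.
Qed.

Fixpoint walk {V : Type} (K : V -> V -> Prop) (x : V) (l : list V) (y : V) : Prop :=
  match l with
  | [] => x = y
  | z :: l' => K x z /\ walk K z l' y
  end.

Fixpoint edges {V : Type} (x : V) (l : list V) : list (V * V) :=
  match l with
  | [] => []
  | z :: l' => (x, z) :: edges z l'
  end.

Lemma reach_walk (V : Type) (K : V -> V -> Prop) x y :
  reach K x y -> exists l, walk K x l y.
Proof.
  intro H; apply clos_rt_rt1n in H; induction H.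
  - exists []; reflexivity.
  - destruct IHclos_refl_trans_1n as [l Hl]; exists (y :: l); simpl; auto.
Qed.

Lemma walk_reach (V : Type) (K K' : V -> V -> Prop) x l y :
  walk K x l y -> (forall a b, In (a, b) (edges x l) -> K a b -> K' a b) ->
  reach K' x y.
Proof.
  revert x; induction l as [|z l IH]; simpl; intros x Hw He.
  - subst; apply rt_refl.
  - destruct Hw as [Hk Hw]. eapply rt_trans.
    + apply rt_step; apply He; auto.
    + apply IH; auto.
Qed.

Lemma covers_weak (V : Type) (K : V -> V -> Prop) x l l' :
  covers K x l -> incl l l' -> covers K x l'.
Proof. unfold covers; auto. Qed.

Definition swp {V : Type} (e : V * V) : V * V := (snd e, fst e).

Lemma bridges_finite (V : Type) (adj : V -> V -> Prop) :
  simple_graph adj -> two_edge_connected adj ->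
  forall D, exists B, forall p q, del_adj adj D p q ->
    ~ reach (del_adj adj (D ++ [(p, q)])) p q -> In (p, q) B.
Proof.
  intros Hsg H2 D; induction D as [|d D [B IH]].
  - exists []; intros p q Hd Hn; exfalso; apply Hn.
    destruct H2 as [_ H2]; apply H2. destruct Hd; auto.
  - destruct d as [x y].
    set (H1 := del_adj adj ((x, y) :: D)).
    assert (Hex : exists B', incl B B' /\
      (reach H1 x y -> exists l, walk H1 x l y /\
         incl (edges x l) B' /\ incl (map swp (edges x l)) B')).
    { destruct (classic (reach H1 x y)) as [Hr|Hr].
      - destruct (reach_walk _ _ _ _ Hr) as [l Hl].
        exists (B ++ edges x l ++ map swp (edges x l)); split.
        + intros z Hz; apply in_app_iff; auto.
        + intros _; exists l; repeat split; auto; intros z Hz;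
            rewrite !in_app_iff; auto.
      - exists B; split; [apply incl_refl| tauto]. }
    destruct Hex as [B' [HB HW]].
    exists B'; intros p q Hd Hn.
    destruct (classic (reach (del_adj adj (D ++ [(p, q)])) p q)) as [Hr|Hr].
    2: { apply HB, IH; auto. apply del_adj_cons in Hd; tauto. }
    set (K := del_adj adj (((x, y) :: D) ++ [(p, q)])) in *.
    assert (Ksym : forall a b, K a b -> K b a) by (apply del_adj_sym; auto).
    assert (Hsplit := split_reach V K (del_adj adj (D ++ [(p, q)])) x y Ksym).
    assert (Hedge : forall a b, del_adj adj (D ++ [(p, q)]) a b ->
                      K a b \/ (a = x /\ b = y) \/ (a = y /\ b = x)).
    { intros a b Hab. destruct (classic ((a, b) = (x, y))) as [E|E].
      { injection E; auto. }
      destruct (classic ((b, a) = (x, y))) as [E'|E'].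
      { injection E'; auto. }
      left. unfold K. apply del_adj_app in Hab as (Hab & F1 & F2).
      apply del_adj_app; split; [apply del_adj_cons; auto| split; auto]. }
    specialize (Hsplit Hedge p q Hr).
    assert (KH1 : forall a b, K a b -> H1 a b).
    { intros a b Hk; unfold K in Hk; apply del_adj_app in Hk; tauto. }
    assert (H1sym : forall a b, H1 a b -> H1 b a) by (apply del_adj_sym; auto).
    destruct Hsplit as [A | [[A B1] | [A B1]]]; [contradiction| |].
    + assert (Hxy : reach H1 x y).
      { eapply rt_trans; [apply reach_sym; auto; apply (reach_mono _ K); eauto|].
        eapply rt_trans; [apply rt_step; exact Hd|].
        apply reach_sym; auto; apply (reach_mono _ K); eauto. }
      destruct (HW Hxy) as [l [Hw [I1 I2]]].
      destruct (classic (In (p, q) (edges x l))) as [Hi|Hi]; [auto|].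
      destruct (classic (In (q, p) (edges x l))) as [Hi'|Hi'].
      { apply I2. change (p, q) with (swp (q, p)). apply in_map; auto. }
      exfalso; apply Hn.
      assert (Hxy' : reach K x y).
      { apply (walk_reach _ H1 K x l y Hw). intros a b Hin Hab.
        unfold K; apply del_adj_app; split; [exact Hab|split; intro E].
        - rewrite E in Hin; auto.
        - injection E; intros; subst; auto. }
      eapply rt_trans; [exact A|]. eapply rt_trans; [exact Hxy'|]. exact B1.
    + assert (Hxy : reach H1 x y).
      { eapply rt_trans; [apply (reach_mono _ K); eauto|].
        eapply rt_trans; [apply rt_step; apply H1sym; exact Hd|].
        apply (reach_mono _ K); eauto. }
      destruct (HW Hxy) as [l [Hw [I1 I2]]].
      destruct (classic (In (p, q) (edges x l))) as [Hi|Hi]; [auto|].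
      destruct (classic (In (q, p) (edges x l))) as [Hi'|Hi'].
      { apply I2. change (p, q) with (swp (q, p)). apply in_map; auto. }
      exfalso; apply Hn.
      assert (Hxy' : reach K x y).
      { apply (walk_reach _ H1 K x l y Hw). intros a b Hin Hab.
        unfold K; apply del_adj_app; split; [exact Hab|split; intro E].
        - rewrite E in Hin; auto.
        - injection E; intros; subst; auto. }
      eapply rt_trans; [exact A|]. eapply rt_trans; [apply reach_sym; auto; exact Hxy'|]. exact B1.
Qed.

Lemma cov_lemma (V : Type) (K : V * V -> V -> V -> Prop) (B : list (V * V)) :
  exists L, forall e, In e B -> forall x, (x = fst e \/ x = snd e) ->
    (exists l, covers (K e) x l) -> covers (K e) x L.
Proof.
  induction B as [|e0 B [L IH]].
  - exists []; intros e [].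
  - assert (G : forall x, exists l1, (exists l, covers (K e0) x l) -> covers (K e0) x l1).
    { intro x; destruct (classic (exists l, covers (K e0) x l)) as [[l Hl]|Hn].
      - exists l; auto.
      - exists []; tauto. }
    destruct (G (fst e0)) as [l1 G1]; destruct (G (snd e0)) as [l2 G2].
    exists (l1 ++ l2 ++ L); intros e [<-|He] x Hx Hc.
    + destruct Hx as [->| ->].
      * eapply covers_weak; [apply G1; auto|]. intros z Hz; rewrite !in_app_iff; auto.
      * eapply covers_weak; [apply G2; auto|]. intros z Hz; rewrite !in_app_iff; auto.
    + eapply covers_weak; [apply (IH e He x Hx Hc)|]. intros z Hz; rewrite !in_app_iff; auto.
Qed.

Lemma not_Rinf (V : Type) (K : V -> V -> Prop) u :
  ~ Rinf K u -> exists l, covers K u l.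
Proof.
  intro H; unfold Rinf in H; apply not_all_ex_not in H as [l Hl].
  exists l; intros z Hz; apply NNPP; intro Hn; apply Hl; eauto.
Qed.

Lemma key (V : Type) (adj : V -> V -> Prop) :
  simple_graph adj -> two_edge_connected adj ->
  forall D v, Rinf (del_adj adj D) v -> exists L, forall u,
    reach (del_adj adj D) v u ->
    (forall f, Rinf (del_adj adj (D ++ [f])) u) \/ In u L.
Proof.
  intros Hsg H2 D v Hv.
  destruct (bridges_finite V adj Hsg H2 D) as [B HB].
  destruct (cov_lemma V (fun e => del_adj adj (D ++ [e])) B) as [L HL].
  exists L; intros u Hu.
  destruct (classic (forall f, Rinf (del_adj adj (D ++ [f])) u)) as [Hg|Hg]; [left; auto|].
  right. apply not_all_ex_not in Hg as [[p q] Hf].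
  apply not_Rinf in Hf as [l Hl].
  set (H := del_adj adj D) in *.
  set (Kf := del_adj adj (D ++ [(p, q)])) in *.
  assert (Hsym : forall a b, H a b -> H b a) by (apply del_adj_sym; auto).
  assert (Ksym : forall a b, Kf a b -> Kf b a) by (apply del_adj_sym; auto).
  assert (FA : (forall z, reach H u z -> reach Kf u z) -> False).
  { intro Hall. destruct (Hv l) as [z [Hz Hnz]]. apply Hnz, Hl, Hall.
    eapply rt_trans; [apply reach_sym; eauto|exact Hz]. }
  destruct (classic (H p q)) as [Hpq|Hpq].
  2: { exfalso; apply FA; intros z; apply reach_mono; intros a b Hab.
       unfold Kf; apply del_adj_app; split; [exact Hab|split; intro E].
       - injection E; intros; subst; auto.
       - injection E; intros; subst; auto. }
  assert (Hedge : forall a b, H a b -> Kf a b \/ (a = p /\ b = q) \/ (a = q /\ b = p)).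
  { intros a b Hab. destruct (classic ((a, b) = (p, q))) as [E|E].
    { injection E; auto. }
    destruct (classic ((b, a) = (p, q))) as [E'|E'].
    { injection E'; auto. }
    left; unfold Kf; apply del_adj_app; auto. }
  assert (Hsp := split_reach V Kf H p q Ksym Hedge).
  destruct (classic (reach Kf p q)) as [Hr|Hr].
  { exfalso; apply FA; intros z Hz.
    destruct (Hsp u z Hz) as [A | [[A B1] | [A B1]]]; auto.
    - apply (reach_trans _ _ u p z A); apply (reach_trans _ _ p q z Hr B1).
    - apply (reach_trans _ _ u q z A); apply (reach_trans _ _ q p z); [apply reach_sym; auto|exact B1]. }
  assert (HinB : In (p, q) B) by (apply HB; auto).
  assert (Cv : forall x, (x = p \/ x = q) -> reach Kf u x -> In u L).
  { intros x Hx Hux.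
    assert (Hcx : covers Kf x l).
    { intros z Hz; apply Hl; eapply rt_trans; eauto. }
    apply (HL (p, q) HinB x Hx (ex_intro _ l Hcx)).
    apply reach_sym; auto. }
  destruct (classic (reach Kf u p)) as [Hp|Hp]; [apply (Cv p); auto|].
  destruct (classic (reach Kf u q)) as [Hq|Hq]; [apply (Cv q); auto|].
  exfalso; apply FA; intros z Hz.
  destruct (Hsp u z Hz) as [A | [[A B1] | [A B1]]]; tauto.
Qed.

Definition Inv {V : Type} (adj : V -> V -> Prop) (D : list (V * V)) (v : V) : Prop :=
  forall f, Rinf (del_adj adj (D ++ [f])) v.

Definition Step {V : Type} (adj : V -> V -> Prop) D (e : V * V) (v w : V) : Prop :=
  reach (del_adj adj (D ++ [e])) v w /\ w <> v /\ Inv adj (D ++ [e]) w.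

Lemma step_ex (V : Type) (adj : V -> V -> Prop) :
  simple_graph adj -> two_edge_connected adj ->
  forall D e v, exists w, Inv adj D v -> Step adj D e v w.
Proof.
  intros Hsg H2 D e v.
  destruct (classic (Inv adj D v)) as [Hi|Hi]; [|exists v; tauto].
  assert (Hr := Hi e).
  destruct (key V adj Hsg H2 (D ++ [e]) v Hr) as [L HL].
  destruct (Hr (v :: L)) as [z [Hz Hnz]].
  exists z; intros _. split; [exact Hz|split].
  - intro E; apply Hnz; left; auto.
  - destruct (HL z Hz) as [G|G]; [exact G| exfalso; apply Hnz; right; auto].
Qed.

Definition next (V : Type) (adj : V -> V -> Prop) (Hsg : simple_graph adj)
  (H2 : two_edge_connected adj) D e v : V :=
  proj1_sig (constructive_indefinite_description _ (step_ex V adj Hsg H2 D e v)).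

Lemma next_spec (V : Type) (adj : V -> V -> Prop) Hsg H2 D e v :
  Inv adj D v -> Step adj D e v (next V adj Hsg H2 D e v).
Proof.
  unfold next; destruct (constructive_indefinite_description _ _) as [w Hw]; simpl; auto.
Qed.

Fixpoint posr (V : Type) (adj : V -> V -> Prop) Hsg H2 (v0 : V)
  (r : list (V * V)) : V :=
  match r with
  | [] => v0
  | e :: r' => next V adj Hsg H2 (rev r') e (posr V adj Hsg H2 v0 r')
  end.

Lemma start_ex (V : Type) (adj : V -> V -> Prop) :
  simple_graph adj -> infinite_type V -> two_edge_connected adj ->
  exists v, Inv adj [] v.
Proof.
  intros Hsg Hinf H2.
  assert (Hout : forall l : list V, exists z, ~ In z l).
  { intro l; apply NNPP; intro Hn; apply Hinf; exists l; intro x.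
    apply NNPP; intro Hx; apply Hn; eauto. }
  destruct (Hout []) as [x0 _].
  assert (Hr : Rinf (del_adj adj []) x0).
  { intro l; destruct (Hout l) as [z Hz]; exists z; split; auto.
    apply (reach_mono _ adj). { intros a b Hab; repeat split; auto. }
    apply (proj1 H2). }
  destruct (key V adj Hsg H2 [] x0 Hr) as [L HL].
  destruct (Hr L) as [z [Hz Hnz]].
  exists z. destruct (HL z Hz) as [G|G]; [exact G|contradiction].
Qed.

Lemma reach_neq_trans (V : Type) (K : V -> V -> Prop) v w :
  reach K v w -> v <> w -> clos_trans V K v w.
Proof.
  intro H; apply clos_rt_rt1n in H; induction H as [|x y z Hxy Hyz IH]; intro Hn.
  - contradiction.
  - destruct (classic (y = z)) as [->|Ne].
    + apply t_step; auto.
    + eapply t_trans; [apply t_step; exact Hxy| apply IH; auto].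
Qed.

Lemma trans_first (V : Type) (K : V -> V -> Prop) v w :
  clos_trans V K v w -> exists y, K v y.
Proof.
  intro H; apply clos_trans_t1n in H; destruct H; eauto.
Qed.

Theorem mainTheorem13 (V : Type) (adj : V -> V -> Prop) :
  simple_graph adj -> infinite_type V -> two_edge_connected adj ->
  cat_win adj.
Proof.
  intros Hsg Hinf H2.
  destruct (start_ex V adj Hsg Hinf H2) as [v0 Hv0].
  set (P := posr V adj Hsg H2 v0).
  exists {| cat_start := v0; cat_move := fun D => P (rev D) |}.
  set (s := {| cat_start := v0; cat_move := fun D => P (rev D) |}).
  assert (Hpos : forall D, cat_pos s D = P (rev D)) by (intros [|? ?]; reflexivity).
  assert (HI : forall D, Inv adj D (P (rev D))).
  { intro D; induction D as [|e D IH] using rev_ind; [exact Hv0|].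
    rewrite rev_unit. unfold P; simpl; fold P. rewrite rev_involutive.
    apply next_spec; auto. }
  split.
  - intro Hiso. destruct (Hv0 (v0, v0) [v0]) as [z [Hz Hnz]].
    assert (Hne : v0 <> z) by (intro E; apply Hnz; left; auto).
    destruct (trans_first _ _ _ _ (reach_neq_trans _ _ _ _ Hz Hne)) as [y Hy].
    apply (Hiso y). destruct Hy; auto.
  - intros D a b _ _ D'. unfold D'.
    rewrite !Hpos. rewrite rev_unit.
    assert (E : P ((a, b) :: rev D) = next V adj Hsg H2 D (a, b) (P (rev D)))
      by (unfold P; simpl; rewrite rev_involutive; reflexivity).
    rewrite E.
    destruct (next_spec V adj Hsg H2 D (a, b) (P (rev D)) (HI D)) as [Hr [Hne _]].
    assert (Ht := reach_neq_trans _ _ _ _ Hr (fun E => Hne (eq_sym E))).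
    split; [|split; [exact Hne|exact Ht]].
    intro Hiso. destruct (trans_first _ _ _ _ Ht) as [y Hy]. exact (Hiso y Hy).
Qed.
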